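(* Let $\mathcal{C}$ be a $\mathbb{Z}_3\mathbb{Z}_9$-additive code of type $(\alpha,\beta;\gamma,\delta;\kappa)$ and let $C=\Phi(\mathcal{C})$, a code of length $n=\alpha+3\beta$ over $\mathbb{Z}_3$. Then: (i) If $\mathbf{u}_1,\ldots,\mathbf{u}_\gamma$ (of order $3$) and $\mathbf{v}_1,\ldots,\mathbf{v}_\delta$ (of order $9$) are the rows of a generator matrix of $\mathcal{C}$, then $\langle C\rangle$ is generated by $\{\Phi(\mathbf{u}_i)\}_{i=1}^\gamma$, $\{\Phi(\mathbf{v}_j)\}_{j=1}^\delta$, $\{\Phi(3\mathbf{v}_k*\mathbf{v}_l)\}_{1\le l\le k\le\delta}$ and $\{\Phi(3\mathbf{v}_x*\mathbf{v}_y*\mathbf{v}_z)\}_{1\le x\le y\le z\le\delta}$. (ii) $\mathrm{rank}(C)\in\left\{\gamma+2\delta,\ldots,\min\left(\beta+\delta+\kappa,\ \gamma+\delta+\binom{\delta+1}{2}+\binom{\delta+2}{3}\right)\right\}$; equivalently, writing $\mathrm{rank}(C)=\gamma+2\delta+\bar r$, we have $\bar r\in\left\{0,1,\ldots,\min\left(\beta-(\gamma-\kappa)-\delta,\ \binom{\delta+1}{2}+\binom{\delta+2}{3}-\delta\right)\right\}$. (iii) The linear code $\langle C\rangle$ over $\mathbb{Z}_3$ is $\mathbb{Z}_3\mathbb{Z}_9$-linear, i.e. $\langle C\rangle=\Phi(\mathcal{D})$ for some $\mathbb{Z}_3\mathbb{Z}_9$-additive code $\mathcal{D}\subseteq\m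athbb{Z}_3^\alpha\times\mathbb{Z}_9^\beta$.
   Context: A $\mathbb{Z}_3\mathbb{Z}_9$-additive code $\mathcal{C}$ is a subgroup of $\mathbb{Z}_3^\alpha\times\mathbb{Z}_9^\beta$ ($\alpha+\beta>0$). As an abelian group $\mathcal{C}\cong\mathbb{Z}_3^\gamma\times\mathbb{Z}_9^\delta$. Let $\mathcal{C}_3$ be the subcode of codewords of order dividing $3$, and $\kappa$ the dimension over $\mathbb{Z}_3$ of the projection of $\mathcal{C}_3$ onto the first $\alpha$ coordinates; then $\mathcal{C}$ is said to be of type $(\alpha,\beta;\gamma,\delta;\kappa)$. A generator matrix of $\mathcal{C}$ has rows $\mathbf{u}_1,\ldots,\mathbf{u}_\gamma$ of order $3$ and $\mathbf{v}_1,\ldots,\mathbf{v}_\delta$ of order $9$ such that every codeword is uniquely $\sum\lambda_i\mathbf{u}_i+\sum\nu_j\mathbf{v}_j$ with $\lambda_i\in\mathbb{Z}_3$, $\nu_j\in\mathbb{Z}_9$. The Gray map $\phi:\mathbb{Z}_9\to\mathbb{Z}_3^3$ is $\phi(\theta)=\theta''(1,1,1)+\theta'(0,1,2)$ where $\theta=3\theta''+\theta'$, $\theta',\theta''\in\{0,1,2\}$, and $\Phi(\mathbf{x},\mathbf{y})=(\mathbf{x},\phi(y_1),\ldots,\phi(y_\beta))$; $C=\Phi(\mathcal{C})$ is a $\mathbb{Z}_3\mathbb{Z}_9$-linear code. $*$ denotes the componentwise product (in $\mathbb{Z}_3$ on the first $\alpha$ coordinates and in $\mathbb{Z}_9$ on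 the last $\beta$), and $3\mathbf{w}$ multiplies every coordinate by $3$ (so the first $\alpha$ coordinates become $0$). $\langle C\rangle$ is the $\mathbb{Z}_3$-linear span of $C$ and $\mathrm{rank}(C)=\dim_{\mathbb{Z}_3}\langle C\rangle$. *)

(* Defs.v *)
From HB Require Import structures.
From mathcomp Require Import all_boot all_order all_algebra.
Set Implicit Arguments. Unset Strict Implicit. Unset Printing Implicit Defensive.
Import Order.TTheory GRing.Theory Num.Theory.
Local Open Scope ring_scope.

Definition amb (a b : nat) := ('rV['F_3]_a * 'rV['Z_9]_b)%type.

Definition is_additive_code (a b : nat) (C : {set amb a b}) : Prop :=
  (0 : amb a b) \in C /\ (forall x y, x \in C -> y \in C -> x - y \in C).

Definition order3 (a b : nat) (w : amb a b) : Prop := w != 0 /\ w *+ 3 = 0.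
Definition order9 (a b : nat) (w : amb a b) : Prop := w *+ 3 != 0 /\ w *+ 9 = 0.

Definition sub3 (a b : nat) (C : {set amb a b}) : {set amb a b} :=
  [set c in C | c *+ 3 == 0].

Definition kappa_of (a b : nat) (C : {set amb a b}) : nat :=
  \dim <<[seq c.1 | c <- enum (sub3 C)]>>%VS.

Definition has_type (a b g d k : nat) (C : {set amb a b}) : Prop :=
  [/\ is_additive_code C,
      exists f : 'rV['F_3]_g * 'rV['Z_9]_d -> amb a b,
        [/\ forall x y, f (x + y) = f x + f y, injective f & f @: setT = C]
    & k = kappa_of C].

Definition comb (a b g d : nat) (u : 'I_g -> amb a b) (v : 'I_d -> amb a b)
  (p : {ffun 'I_g -> 'Z_3} * {ffun 'I_d -> 'Z_9}) : amb a b :=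
  \sum_(i < g) u i *+ p.1 i + \sum_(j < d) v j *+ p.2 j.

Definition is_gen_matrix (a b g d : nat) (C : {set amb a b})
  (u : 'I_g -> amb a b) (v : 'I_d -> amb a b) : Prop :=
  [/\ forall i, order3 (u i), forall j, order9 (v j),
      injective (comb u v) & comb u v @: setT = C].

(* Gray map phi : Z_9 -> Z_3^3, phi(3t''+t') = t''(1,1,1) + t'(0,1,2) *)
Definition phi (t : 'Z_9) : 'rV['F_3]_3 :=
  \row_(k < 3) (((t %/ 3)%N)%:R + ((t %% 3)%N)%:R * (k : nat)%:R).

Lemma divord_proof (b : nat) (j : 'I_(3 * b)) : (j %/ 3 < b)%N.
Proof. case: j => j /= h; rewrite ltn_divLR //; by rewrite mulnC. Qed.
Definition divord (b : nat) (j : 'I_(3 * b)) : 'I_b := Ordinal (divord_proof j).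
Definition modord (b : nat) (j : 'I_(3 * b)) : 'I_3 := Ordinal (@ltn_pmod j 3 isT).

(* Phi(x, y) = (x, phi(y_1), ..., phi(y_b)); coordinate a + 3m + r of the
   image is coordinate r of phi(y_m) *)
Definition Phi (a b : nat) (w : amb a b) : 'rV['F_3]_(a + 3 * b) :=
  row_mx w.1 (\row_(j < 3 * b) phi (w.2 0 (divord j)) 0 (modord j)).

Definition cwmul (a b : nat) (w1 w2 : amb a b) : amb a b :=
  (map2_mx *%R w1.1 w2.1, map2_mx *%R w1.2 w2.2).

Definition rank3 (n : nat) (C : {set 'rV['F_3]_n}) : nat := \dim <<enum C>>%VS.

Definition Phi_code (a b : nat) (C : {set amb a b}) : {set 'rV['F_3]_(a + 3 * b)} :=
  [set Phi c | c in C].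

(* Main.v *)
Require Import Defs.
From HB Require Import structures.
From mathcomp Require Import all_boot all_order all_algebra.
Import Order.TTheory GRing.Theory Num.Theory.
Local Open Scope ring_scope.
From mathcomp Require Import all_field.
From mathcomp Require Import ring zify.

Lemma brute3 n1 n2 n3 (P : nat -> nat -> nat -> bool) :
  all (fun i => all (fun j => all (fun k => P i j k) (iota 0 n3)) (iota 0 n2)) (iota 0 n1) ->
  forall i j k, (i < n1)%N -> (j < n2)%N -> (k < n3)%N -> P i j k.
Proof.
move=> H i j k hi hj hk.
have /allP /(_ i) := H; rewrite mem_iota hi => /(_ isT) /allP /(_ j).
rewrite mem_iota hj => /(_ isT) /allP /(_ k); rewrite mem_iota hk; exact.
Qed.

Lemma brute2 n1 n2 (P : nat -> nat -> bool) :
  all (fun i => all (fun j => P i j) (iota 0 n2)) (iota 0 n1) ->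
  forall i j, (i < n1)%N -> (j < n2)%N -> P i j.
Proof.
move=> H i j hi hj.
have /allP /(_ i) := H; rewrite mem_iota hi => /(_ isT) /allP /(_ j).
by rewrite mem_iota hj => /(_ isT).
Qed.
Lemma brute1 n1 (P : nat -> bool) :
  all P (iota 0 n1) -> forall i, (i < n1)%N -> P i.
Proof. by move=> /allP H i hi; apply: H; rewrite mem_iota. Qed.

Lemma Z9E (x : 'Z_9) : x = (x : nat)%:R.
Proof. by rewrite natr_Zp. Qed.
Lemma valZ9 (n : nat) : ((n%:R : 'Z_9) : nat) = (n %% 9)%N.
Proof. by rewrite val_Zp_nat. Qed.
Lemma F3v (n : nat) : ((n%:R : 'F_3) : nat) = (n %% 3)%N.
Proof. exact: (@val_Zp_nat 3 isT n). Qed.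
Lemma F3E (m n : nat) : (m %% 3 = n %% 3)%N -> (m%:R : 'F_3) = n%:R.
Proof. by move=> h; apply/val_inj; rewrite /= !F3v. Qed.
Lemma F3_3 (x : 'F_3) : x *+ 3 = 0.
Proof.
have h : (3%:R : 'F_3) = 0 by apply/val_inj; exact: (F3v 3).
by rewrite -mulr_natr h mulr0.
Qed.
Lemma Z9_9 (x : 'Z_9) : x *+ 9 = 0.
Proof.
have h : (9%:R : 'Z_9) = 0 by apply/val_inj; exact: (@val_Zp_nat 9 isT 9).
by rewrite -mulr_natr h mulr0.
Qed.

Definition fphi (x k : nat) := (x %/ 3 + (x %% 3) * k)%N.
Lemma phiE (x : 'Z_9) (k : 'I_3) : phi x 0 k = (fphi x k)%:R.
Proof. by rewrite /phi mxE natrD natrM. Qed.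

Lemma phiS1 (s t : 'Z_9) (k : 'I_3) :
  phi s 0 k + phi t 0 k = phi (s + t + (s * t + s * s * t + s * t * t) *+ 3) 0 k.
Proof.
rewrite !phiE -natrD; apply: F3E.
rewrite (Z9E s) (Z9E t) -!natrM -!natrD -(mulr_natr _ 3) -natrM -natrD !valZ9.
apply/eqP; move: (ltn_ord s) (ltn_ord t) (ltn_ord k).
move: (nat_of_ord s) (nat_of_ord t) (nat_of_ord k) => {s t k}.
apply: brute3. by vm_compute.
Qed.

Lemma phiS2 (s t : 'Z_9) (k : 'I_3) : s *+ 3 = 0 ->
  phi s 0 k + phi t 0 k = phi (s + t) 0 k.
Proof.
move=> hs; rewrite phiS1.
have -> : (s * t + s * s * t + s * t * t) *+ 3 = (s *+ 3) * (t + s * t + t * t) by ring.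
by rewrite hs mul0r addr0.
Qed.

Lemma phi_inj : injective phi.
Proof.
move=> s t h.
have h0 : phi s 0 0 = phi t 0 0 by rewrite h.
have h1 : phi s 0 1 = phi t 0 1 by rewrite h.
move: h0 h1; rewrite !phiE => /(congr1 val) /= h0 /(congr1 val) /= h1.
move: h0 h1; rewrite !F3v => h0 h1.
apply/val_inj => /=; apply/eqP.
have : ((fphi s 0 %% 3 == fphi t 0 %% 3) && (fphi s (1 %% 3) %% 3 == fphi t (1 %% 3) %% 3) ==> (nat_of_ord s == t))%N.
  move: (ltn_ord s) (ltn_ord t); move: (nat_of_ord s) (nat_of_ord t).
  apply: brute2; by vm_compute.
by rewrite h0 h1 !eqxx.
Qed.

Lemma Z9_3 (s : 'Z_9) : s *+ 3 = 0 -> s = (1 *+ 3) *+ (s %/ 3)%N.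
Proof.
have hs := Z9E s; move: (nat_of_ord s) (ltn_ord s) hs => n hn -> {s}.
move=> h; apply/eqP; move: h => /eqP; apply/implyP.
move: n hn; apply: brute1; by vm_compute.
Qed.

Lemma Z9all2 (P : 'Z_9 -> 'Z_9 -> bool) :
  all (fun i => all (fun j => P i%:R j%:R) (iota 0 9)) (iota 0 9) -> forall s t, P s t.
Proof.
move=> H s t; rewrite (Z9E s) (Z9E t).
by move: (nat_of_ord s) (nat_of_ord t) (ltn_ord s) (ltn_ord t); apply: brute2.
Qed.
Lemma Z9all3 (P : 'Z_9 -> 'Z_9 -> 'Z_9 -> bool) :
  all (fun i => all (fun j => all (fun k => P i%:R j%:R k%:R) (iota 0 9)) (iota 0 9)) (iota 0 9) ->
  forall s t w, P s t w.
Proof.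
move=> H s t w; rewrite (Z9E s) (Z9E t) (Z9E w).
by move: (nat_of_ord s) (nat_of_ord t) (nat_of_ord w) (ltn_ord s) (ltn_ord t) (ltn_ord w); apply: brute3.
Qed.

Set Implicit Arguments. Unset Strict Implicit. Unset Printing Implicit Defensive.

Lemma maddE (R : nmodType) m n (A B : 'M[R]_(m, n)) i j : (A + B) i j = A i j + B i j.
Proof. by rewrite mxE. Qed.
Lemma moppE (R : zmodType) m n (A : 'M[R]_(m, n)) i j : (- A) i j = - A i j.
Proof. by rewrite mxE. Qed.
Lemma m0E (R : nmodType) m n i j : (0 : 'M[R]_(m, n)) i j = 0.
Proof. by rewrite mxE. Qed.
Section Amb.
Variables a b : nat.
Local Notation A := (amb a b).
Implicit Types x y z w : A.

Lemma fstD x y : (x + y).1 = x.1 + y.1. Proof. by []. Qed.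
Lemma sndD x y : (x + y).2 = x.2 + y.2. Proof. by []. Qed.
Lemma fstN x : (- x).1 = - x.1. Proof. by []. Qed.
Lemma sndN x : (- x).2 = - x.2. Proof. by []. Qed.
Lemma fst0 : (0 : A).1 = 0. Proof. by []. Qed.
Lemma snd0 : (0 : A).2 = 0. Proof. by []. Qed.
Lemma fstMn x n : (x *+ n).1 = x.1 *+ n.
Proof. by elim: n => // n IH; rewrite !mulrS fstD IH. Qed.
Lemma sndMn x n : (x *+ n).2 = x.2 *+ n.
Proof. by elim: n => // n IH; rewrite !mulrS sndD IH. Qed.
Lemma cw1 x y i : (cwmul x y).1 0 i = x.1 0 i * y.1 0 i.
Proof. by rewrite /cwmul /= mxE. Qed.
Lemma cw2 x y i : (cwmul x y).2 0 i = x.2 0 i * y.2 0 i.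
Proof. by rewrite /cwmul /= mxE. Qed.

Lemma ambP x y : (forall i, x.1 0 i = y.1 0 i) -> (forall m, x.2 0 m = y.2 0 m) -> x = y.
Proof.
case: x => x1 x2; case: y => y1 y2 /= h1 h2.
by congr pair; apply/rowP => i; [apply: h1 | apply: h2].
Qed.



Local Ltac ambsimp := repeat first [rewrite fst0 | rewrite snd0 | rewrite m0E | rewrite fstMn | rewrite sndMn
  | rewrite mulmxnE | rewrite fstD | rewrite sndD | rewrite fstN | rewrite sndN | rewrite maddE
  | rewrite moppE | rewrite cw1 | rewrite cw2].
Lemma mul9 x : x *+ 9 = 0.
Proof.
apply: ambP => i; last by ambsimp; rewrite Z9_9.
have -> : x *+ 9 = x *+ 3 *+ 3 by rewrite -mulrnA.
by ambsimp; rewrite F3_3.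
Qed.

Lemma fst3 x i : (x *+ 3).1 0 i = 0.
Proof. by ambsimp; rewrite F3_3. Qed.

Definition rr x y := cwmul x y + cwmul (cwmul x x) y + cwmul (cwmul x y) y.

Lemma Phi_addE x y z :
  x.1 + y.1 = z.1 ->
  (forall m k, phi (x.2 0 m) 0 k + phi (y.2 0 m) 0 k = phi (z.2 0 m) 0 k) ->
  Phi x + Phi y = Phi z.
Proof.
move=> h1 h2; rewrite /Phi add_row_mx h1; congr row_mx.
by apply/rowP => j; have := h2 (divord j) (modord j); rewrite !mxE.
Qed.

Lemma PhiL1 x y : Phi x + Phi y = Phi (x + y + rr x y *+ 3).
Proof.
apply: Phi_addE.
  by apply/rowP => i; ambsimp; rewrite F3_3 addr0.
by move=> m k; ambsimp; rewrite phiS1.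
Qed.

Lemma PhiL2 x y : x *+ 3 = 0 -> Phi x + Phi y = Phi (x + y).
Proof.
move=> h; apply: Phi_addE => // m k; ambsimp; rewrite phiS2 //.
by move/(congr1 (fun w : A => w.2 0 m)): h; ambsimp.
Qed.

Lemma Phi0 : Phi (0 : A) = 0.
Proof.
have h := @PhiL2 (0 : A) (0 : A) (mul0rn _ _); rewrite addr0 in h.
by apply: (addrI (Phi (0 : A))); rewrite addr0.
Qed.

Lemma divord_mk (m : 'I_b) (k : 'I_3) : (3 * m + k < 3 * b)%N.
Proof. have := ltn_ord m; have := ltn_ord k; lia. Qed.

Lemma Phi_inj : injective (@Phi a b).
Proof.
move=> x y /eq_row_mx [h1 h2]; apply: ambP => [i|m]; first by rewrite h1.
apply: phi_inj; apply/rowP => k.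
have /rowP /(_ (Ordinal (divord_mk m k))) := h2; rewrite !mxE.
have -> : divord (Ordinal (divord_mk m k)) = m.
  apply/val_inj => /=; have := ltn_ord k; lia.
have -> : modord (Ordinal (divord_mk m k)) = k.
  apply/val_inj => /=; have := ltn_ord k; lia.
by [].
Qed.

End Amb.
Ltac ambsimp := repeat first [rewrite fst0 | rewrite snd0 | rewrite m0E | rewrite fstMn | rewrite sndMn
  | rewrite mulmxnE | rewrite fstD | rewrite sndD | rewrite fstN | rewrite sndN | rewrite maddE
  | rewrite moppE | rewrite cw1 | rewrite cw2].



Section Ident.
Variables a b : nat.
Local Notation A := (amb a b).
Implicit Types x y z w : A.

Definition A2 x y := cwmul x y *+ 3.
Definition T3 x y z := cwmul (cwmul x y) z *+ 3.

Lemma rrE x y : rr x y *+ 3 = A2 x y + T3 x x y + T3 x y y.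
Proof. by rewrite /rr !mulrnDl. Qed.

Lemma A2sym x y : A2 x y = A2 y x.
Proof. by apply: ambP => i; rewrite /A2; ambsimp; rewrite mulrC. Qed.
Lemma A2D x x' y : A2 (x + x') y = A2 x y + A2 x' y.
Proof. by apply: ambP => i; rewrite /A2; ambsimp; ring. Qed.
Lemma A20 y : A2 0 y = 0.
Proof. by apply: ambP => i; rewrite /A2; ambsimp; ring. Qed.
Lemma T3s12 x y z : T3 x y z = T3 y x z.
Proof. by apply: ambP => i; rewrite /T3; ambsimp; ring. Qed.
Lemma T3s23 x y z : T3 x y z = T3 x z y.
Proof. by apply: ambP => i; rewrite /T3; ambsimp; ring. Qed.
Lemma T3D x x' y z : T3 (x + x') y z = T3 x y z + T3 x' y z.
Proof. by apply: ambP => i; rewrite /T3; ambsimp; ring. Qed.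
Lemma T30 y z : T3 0 y z = 0.
Proof. by apply: ambP => i; rewrite /T3; ambsimp; ring. Qed.

Lemma snd3 x m : x *+ 3 = 0 -> x.2 0 m *+ 3 = 0.
Proof. by move/(congr1 (fun w : A => w.2 0 m)); ambsimp. Qed.

Lemma A2u x y : x *+ 3 = 0 -> A2 x y = 0.
Proof.
move=> h; apply: ambP => i; rewrite /A2; ambsimp; first by rewrite F3_3.
by rewrite -mulrnAl snd3 // mul0r.
Qed.
Lemma T3u x y z : x *+ 3 = 0 -> T3 x y z = 0.
Proof.
move=> h; apply: ambP => i; rewrite /T3; ambsimp; first by rewrite F3_3.
by rewrite -!mulrnAl snd3 // !mul0r.
Qed.

Lemma P3A2 x y : A2 x y *+ 3 = 0.
Proof. by rewrite /A2 -mulrnA mul9. Qed.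
Lemma P3T3 x y z : T3 x y z *+ 3 = 0.
Proof. by rewrite /T3 -mulrnA mul9. Qed.
Lemma P3rr x y : rr x y *+ 3 *+ 3 = 0.
Proof. by rewrite -mulrnA mul9. Qed.

Lemma polA2 x y : A2 x y = rr x (y *+ 2) *+ 3 + rr (x *+ 2) y *+ 3.
Proof.
apply: ambP => i; rewrite /A2; ambsimp; first by rewrite !F3_3 addr0.
rewrite /rr; ambsimp; apply/eqP; move: (x.2 0 i) (y.2 0 i).
by apply: Z9all2; vm_compute.
Qed.

Lemma polB x y : T3 x x y = rr x y *+ 3 *+ 2 + rr (x *+ 2) y *+ 3 *+ 2.
Proof.
apply: ambP => i; rewrite /T3; ambsimp; first by rewrite !F3_3 !mul0rn addr0.
rewrite /rr; ambsimp; apply/eqP; move: (x.2 0 i) (y.2 0 i).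
by apply: Z9all2; vm_compute.
Qed.

Lemma polT x y z : T3 x y z = (T3 (x + y) (x + y) z + T3 x x z *+ 2 + T3 y y z *+ 2) *+ 2.
Proof.
apply: ambP => i; rewrite /T3; ambsimp; first by rewrite !F3_3 !mul0rn !addr0 mul0rn.
apply/eqP; move: (x.2 0 i) (y.2 0 i) (z.2 0 i).
by apply: Z9all3; vm_compute.
Qed.

End Ident.


Section Main.
Variables (a b g d : nat) (C : {set amb a b}) (u : 'I_g -> amb a b) (v : 'I_d -> amb a b).
Local Notation A := (amb a b).
Local Notation V := ('rV['F_3]_(a + 3 * b)).
Hypothesis HC : is_additive_code C.
Hypothesis Hu3 : forall i, u i *+ 3 = 0.
Hypothesis HuC : forall i, u i \in C.
Hypothesis HvC : forall j, v j \in C.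
Hypothesis Hgen : forall X : A -> Prop, X 0 -> (forall x y, X x -> X y -> X (x + y)) ->
  (forall i, X (u i)) -> (forall j, X (v j)) -> forall c, c \in C -> X c.

Definition Gl : seq V :=
  [seq Phi (u i) | i <- enum 'I_g]
       ++ [seq Phi (v j) | j <- enum 'I_d]
       ++ [seq Phi ((cwmul (v kl.1) (v kl.2)) *+ 3)
            | kl <- enum [set kl : 'I_d * 'I_d | (kl.2 <= kl.1)%N]]
       ++ [seq Phi ((cwmul (cwmul (v xyz.1.1) (v xyz.1.2)) (v xyz.2)) *+ 3)
            | xyz <- enum [set xyz : 'I_d * 'I_d * 'I_d |
                             (xyz.1.1 <= xyz.1.2)%N && (xyz.1.2 <= xyz.2)%N]].
Definition W := <<Gl>>%VS.
Definition S := <<enum (Phi_code C)>>%VS.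

Lemma C0 : (0 : A) \in C. Proof. by case: HC. Qed.
Lemma CB x y : x \in C -> y \in C -> x - y \in C. Proof. by case: HC => _; apply. Qed.
Lemma CN x : x \in C -> - x \in C.
Proof. by move=> h; rewrite -sub0r CB // C0. Qed.
Lemma CD x y : x \in C -> y \in C -> x + y \in C.
Proof. by move=> hx hy; rewrite -[y]opprK CB // CN. Qed.
Lemma CMn x n : x \in C -> x *+ n \in C.
Proof. by move=> h; elim: n => [|n IH]; rewrite ?mulr0n ?C0 // mulrS CD. Qed.

Lemma PhiCS c : c \in C -> Phi c \in S.
Proof. by move=> h; apply: memv_span; rewrite mem_enum imset_f. Qed.

Definition P3U (U : {vspace V}) (z : A) := z *+ 3 = 0 /\ Phi z \in U.

Lemma P3U0 U : P3U U 0.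
Proof. by split; rewrite ?mul0rn // Phi0 mem0v. Qed.
Lemma P3UD U z z' : P3U U z -> P3U U z' -> P3U U (z + z').
Proof.
move=> [h1 h2] [h1' h2']; split; first by rewrite mulrnDl h1 h1' addr0.
by rewrite -PhiL2 // memvD.
Qed.
Lemma P3UMn U z n : P3U U z -> P3U U (z *+ n).
Proof.
move=> h; elim: n => [|n IH]; first by rewrite mulr0n; exact: P3U0.
by rewrite mulrS; apply: P3UD.
Qed.
Lemma P3UN U z : P3U U z -> P3U U (- z).
Proof.
move=> h; have -> : - z = z *+ 2.
  by case: h => h3 _; apply/esym/eqP; rewrite -addr_eq0 -mulrSr h3.
exact: P3UMn.
Qed.
Lemma P3U_rr (U : {vspace V}) (x y : A) : Phi x + Phi y - Phi (x + y) \in U -> P3U U (rr x y *+ 3).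
Proof.
move=> h; split; first exact: P3rr.
have e : Phi x + Phi y - Phi (x + y) = Phi (rr x y *+ 3).
  by rewrite PhiL1 (addrC (x + y)) -(PhiL2 _ (P3rr x y)) addrK.
by rewrite -e.
Qed.

Lemma QS x y : x \in C -> y \in C -> P3U S (rr x y *+ 3).
Proof.
move=> hx hy; apply: P3U_rr.
by apply: memvB; [apply: memvD; apply: PhiCS | apply: PhiCS; apply: CD].
Qed.

Lemma A2S x y : x \in C -> y \in C -> P3U S (A2 x y).
Proof.
by move=> hx hy; rewrite polA2; apply: P3UD; apply: QS => //; apply: CMn.
Qed.
Lemma BS x y : x \in C -> y \in C -> P3U S (T3 x x y).
Proof.
by move=> hx hy; rewrite polB; apply: P3UD; apply: P3UMn; apply: QS => //; apply: CMn.
Qed.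
Lemma T3S x y z : x \in C -> y \in C -> z \in C -> P3U S (T3 x y z).
Proof.
move=> hx hy hz; rewrite polT; apply: P3UMn; apply: P3UD; first apply: P3UD.
- exact: BS (CD hx hy) hz.
- apply: P3UMn; exact: BS hx hz.
- apply: P3UMn; exact: BS hy hz.
Qed.

Lemma W_sub_S : (W <= S)%VS.
Proof.
apply/span_subvP => w; rewrite !mem_cat => /or4P [] /mapP [t _ ->].
- exact: PhiCS.
- exact: PhiCS.
- by case: (A2S (HvC t.1) (HvC t.2)).
- by case: (T3S (HvC t.1.1) (HvC t.1.2) (HvC t.2)).
Qed.


Lemma genA2 (j l : 'I_d) : P3U W (A2 (v j) (v l)).
Proof.
wlog hlj : j l / (l <= j)%N.
  move=> H; case: (leqP l j) => h; first exact: H.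
  by rewrite A2sym; apply: H; apply: ltnW.
split; first exact: P3A2.
apply: memv_span; rewrite !mem_cat; apply/or4P; apply: Or43.
by apply/mapP; exists (j, l); rewrite // mem_enum inE.
Qed.

Lemma key3 (i j k : 'I_d) : (i <= j)%N -> (j <= k)%N -> P3U W (T3 (v i) (v j) (v k)).
Proof.
move=> hij hjk; split; first exact: P3T3.
apply: memv_span; rewrite !mem_cat; apply/or4P; apply: Or44.
by apply/mapP; exists (i, j, k); rewrite // mem_enum inE /= hij hjk.
Qed.

Lemma genT3 (i j k : 'I_d) : P3U W (T3 (v i) (v j) (v k)).
Proof.
case: (leqP i j) => hij; case: (leqP j k) => hjk.
- exact: key3.
- case: (leqP i k) => hik.
    by rewrite T3s23; apply: key3 => //; apply: ltnW.
  by rewrite T3s23 T3s12; apply: key3 => //; apply: ltnW.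
- case: (leqP i k) => hik.
    by rewrite T3s12; apply: key3 => //; apply: ltnW.
  by rewrite T3s12 T3s23; apply: key3 => //; apply: ltnW.
- by rewrite T3s12 T3s23 T3s12; apply: key3; apply: ltnW.
Qed.

Lemma A2W x y : x \in C -> y \in C -> P3U W (A2 x y).
Proof.
move=> hx; move: x hx y; apply: Hgen.
- by move=> y _; rewrite A20; apply: P3U0.
- by move=> x x' hx hx' y hy; rewrite A2D; apply: P3UD; [apply: hx | apply: hx'].
- by move=> i y _; rewrite A2u //; apply: P3U0.
move=> j; apply: Hgen.
- by rewrite A2sym A20; apply: P3U0.
- by move=> y y' hy hy'; rewrite A2sym A2D; apply: P3UD; rewrite A2sym.
- by move=> i; rewrite A2sym A2u //; apply: P3U0.
- exact: genA2.
Qed.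

Lemma T3W x y z : x \in C -> y \in C -> z \in C -> P3U W (T3 x y z).
Proof.
move=> hx; move: x hx y z; apply: Hgen.
- by move=> y z _ _; rewrite T30; apply: P3U0.
- by move=> x x' hx hx' y z hy hz; rewrite T3D; apply: P3UD; [apply: hx | apply: hx'].
- by move=> i y z _ _; rewrite T3u //; apply: P3U0.
move=> i y z hy; move: y hy z; apply: Hgen.
- by move=> z _; rewrite T3s12 T30; apply: P3U0.
- move=> y y' hy hy' z hz; rewrite T3s12 T3D; apply: P3UD; rewrite T3s12; [exact: hy | exact: hy'].
- by move=> i' z _; rewrite T3s12 T3u //; apply: P3U0.
move=> j; apply: Hgen.
- by rewrite T3s23 T3s12 T30; apply: P3U0.
- by move=> z z' hz hz'; rewrite T3s23 T3s12 T3D; apply: P3UD; rewrite -T3s12 -T3s23.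
- by move=> i'; rewrite T3s23 T3s12 T3u //; apply: P3U0.
- exact: genT3.
Qed.

Lemma QW x y : x \in C -> y \in C -> P3U W (rr x y *+ 3).
Proof.
by move=> hx hy; rewrite rrE; apply: P3UD; [apply: P3UD; [apply: A2W | apply: T3W] | apply: T3W].
Qed.

Lemma PhiCW c : c \in C -> Phi c \in W.
Proof.
have : c \in C -> c \in C /\ Phi c \in W; last by move=> H hc; case: (H hc).
move=> hc; move: c hc; apply: Hgen.
- by rewrite C0 Phi0 mem0v.
- move=> x y [hx hwx] [hy hwy]; split; first exact: CD.
  have e : Phi (x + y) = Phi x + Phi y - Phi (rr x y *+ 3).
    by rewrite PhiL1 (addrC (x + y)) -(PhiL2 _ (P3rr x y)) addrAC subrr add0r.
  by rewrite e memvB ?memvD //; case: (QW hx hy).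
- move=> i; split => //; apply: memv_span; rewrite mem_cat; apply/orP; left.
  by apply/mapP; exists i; rewrite ?mem_enum.
- move=> j; split => //; apply: memv_span; rewrite mem_cat; apply/orP; right.
  rewrite mem_cat; apply/orP; left.
  by apply/mapP; exists j; rewrite ?mem_enum.
Qed.

Lemma S_sub_W : (S <= W)%VS.
Proof.
apply/span_subvP => w; rewrite mem_enum => /imsetP [c hc ->]; exact: PhiCW.
Qed.

Lemma SW : S = W.
Proof. by apply/eqP; rewrite eqEsubv S_sub_W W_sub_S. Qed.


Lemma PhiP (z w : A) : z *+ 3 = 0 -> Phi (z + w) = Phi z + Phi w.
Proof. by move=> h; rewrite PhiL2. Qed.
Lemma PhiDE (x y : A) : Phi (x + y) = Phi x + Phi y - Phi (rr x y *+ 3).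
Proof. by rewrite PhiL1 (addrC (x + y)) -(PhiL2 _ (P3rr x y)) addrAC subrr add0r. Qed.

Definition Dg (x : A) := exists c t, [/\ c \in C, P3U W t & x = c + t].
Definition Im (w : V) := exists x, Dg x /\ Phi x = w.

Lemma zmodAC (M : zmodType) (q t t' c c' : M) :
  q + (t + t') + (c + c' - q) = t + c + (t' + c').
Proof.
by rewrite addrAC (addrC q) subrK addrACA (addrC c) (addrC c').
Qed.

Lemma Im0 : Im 0.
Proof.
exists 0; split; last exact: Phi0.
by exists 0, 0; split; [exact: C0 | exact: P3U0 | rewrite addr0].
Qed.

Lemma ImD w w' : Im w -> Im w' -> Im (w + w').
Proof.
move=> [x [[c [t [hc ht ->]]] <-]] [x' [[c' [t' [hc' ht' ->]]] <-]].
have hQ := QW hc hc'.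
have hT : P3U W (rr c c' *+ 3 + (t + t')) by apply: P3UD => //; apply: P3UD.
exists (c + c' + (rr c c' *+ 3 + (t + t'))); split.
  by exists (c + c'), (rr c c' *+ 3 + (t + t')); split => //; apply: CD.
rewrite addrC (PhiP (c + c') hT.1) (PhiP (t + t') hQ.1) (PhiP t' ht.1).
rewrite (PhiDE c c') (addrC c t) (addrC c' t') (PhiP c ht.1) (PhiP c' ht'.1).
exact: zmodAC.
Qed.

Lemma ImMn w n : Im w -> Im (w *+ n).
Proof.
by move=> h; elim: n => [|n IH]; [rewrite mulr0n; exact: Im0 | rewrite mulrS; apply: ImD].
Qed.

Lemma ImZ (k : 'F_3) w : Im w -> Im (k *: w).
Proof. by move=> h; rewrite -[k]natr_Zp scaler_nat; apply: ImMn. Qed.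

Lemma ImG w : w \in Gl -> Im w.
Proof.
rewrite !mem_cat => /or4P [] /mapP [t _ ->].
- exists (u t); split => //; exists (u t), 0; split => //; [exact: P3U0 | by rewrite addr0].
- exists (v t); split => //; exists (v t), 0; split => //; [exact: P3U0 | by rewrite addr0].
- set z := _ *+ 3; exists z; split => //; exists 0, z; split; rewrite ?add0r //; first exact: C0.
  exact: genA2.
- set z := _ *+ 3; exists z; split => //; exists 0, z; split; rewrite ?add0r //; first exact: C0.
  exact: genT3.
Qed.

Lemma ImW w : w \in W -> Im w.
Proof.
move=> hw; have -> := @coord_span _ _ _ (in_tuple Gl) w hw.
apply: (big_ind Im); [exact: Im0 | exact: ImD | ].
move=> i _; apply: ImZ; apply: ImG; apply: mem_nth.
exact: (ltn_ord i).
Qed.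

Lemma ImDg x : Phi x \in W -> Dg x.
Proof. by move=> /ImW [x0 [h /Phi_inj e]]; rewrite -e. Qed.

Definition Dset := [set x : A | Phi x \in S].

Lemma Dset_add : is_additive_code Dset.
Proof.
split; first by rewrite inE Phi0 mem0v.
move=> x y; rewrite !inE SW => /ImDg [c [t [hc ht ->]]] /ImDg [c' [t' [hc' ht' ->]]].
have -> : c + t - (c' + t') = (t - t') + (c - c').
  by rewrite opprD addrACA addrC.
have ht2 : P3U W (t - t') by apply: P3UD => //; apply: P3UN.
rewrite PhiP; last by case: ht2.
by apply: memvD; [case: ht2 | apply: PhiCW; apply: CB].
Qed.

Lemma Dset_im : [set x | x \in S] = Phi_code Dset.
Proof.
apply/setP => w; rewrite inE; apply/idP/imsetP.
  rewrite SW => hw; case: (ImW hw) => x [_ e]; exists x => //.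
  by rewrite inE SW e.
by move=> [x]; rewrite inE => h ->.
Qed.


Lemma dimS_size : (\dim S <= size Gl)%N.
Proof. by rewrite SW dim_span. Qed.

Definition L1 : seq V := [seq row_mx (u i).1 (0 : 'rV['F_3]_(3 * b)) | i <- enum 'I_g].
Definition L2 : seq V := [seq Phi (v j) | j <- enum 'I_d].
Definition e3 (m : 'I_b) : A := (0, delta_mx 0 m *+ 3).
Definition L3 : seq V := [seq Phi (e3 m) | m <- enum 'I_b].

Lemma fst3row (w : A) : (w *+ 3).1 = 0.
Proof. by apply/rowP => i; rewrite fst3 mxE. Qed.

Lemma e3P3 m : e3 m *+ 3 = 0.
Proof.
apply: ambP => i; ambsimp; rewrite /e3 /=; first by rewrite mul0rn.
by rewrite -mulrnA Z9_9.
Qed.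

Lemma e3sum (z : A) : z *+ 3 = 0 ->
  ((0 : 'rV['F_3]_a), z.2) = \sum_(m < b) e3 m *+ divn (z.2 0 m) 3.
Proof.
move=> h; apply: ambP => [i|m].
- rewrite (big_morph (fun x : A => x.1) (@fstD a b) (@fst0 a b)) summxE /= m0E.
  by rewrite big1 // => m _; rewrite fstMn /= mulmxnE m0E mul0rn.
- rewrite (big_morph (fun x : A => x.2) (@sndD a b) (@snd0 a b)) summxE /=.
  rewrite (bigD1 m) //= big1 ?addr0.
    by rewrite sndMn /= !mulmxnE mxE !eqxx /= -Z9_3 //; apply: snd3.
  move=> m' hm'; rewrite sndMn /= !mulmxnE mxE /= eq_sym (negbTE hm').
  by rewrite !mul0rn.
Qed.

Lemma P3L3 (z : A) : z *+ 3 = 0 -> Phi ((0 : 'rV['F_3]_a), z.2) \in <<L3>>%VS.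
Proof.
move=> h; rewrite e3sum //.
suff : P3U <<L3>>%VS (\sum_(m < b) e3 m *+ divn (z.2 0 m) 3) by case.
apply: (big_ind (P3U <<L3>>%VS)); [exact: P3U0 | exact: P3UD | ] => m _.
apply: P3UMn; split; first exact: e3P3.
by apply: memv_span; apply/mapP; exists m; rewrite ?mem_enum.
Qed.

Lemma PhiSplit (z : A) : Phi z = row_mx z.1 0 + Phi ((0 : 'rV['F_3]_a), z.2).
Proof. by rewrite /Phi add_row_mx addr0 add0r. Qed.

Definition U3 := (<<L1>> + <<L2>> + <<L3>>)%VS.

Lemma W_sub_U3 : (W <= U3)%VS.
Proof.
have s1 : (<<L1>> <= U3)%VS by apply: subv_trans (addvSl _ _) (addvSl _ _).
have s2 : (<<L2>> <= U3)%VS by apply: subv_trans (addvSr _ _) (addvSl _ _).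
have s3 : (<<L3>> <= U3)%VS by apply: addvSr.
apply/span_subvP => w; rewrite !mem_cat => /or4P [] /mapP [t _ ->].
- rewrite PhiSplit; apply: memvD; last by apply: (subvP s3); apply: P3L3.
  by apply: (subvP s1); apply: memv_span; apply/mapP; exists t; rewrite ?mem_enum.
- by apply: (subvP s2); apply: memv_span; apply/mapP; exists t; rewrite ?mem_enum.
- rewrite PhiSplit fst3row row_mx0 add0r; apply: (subvP s3).
  exact: P3L3 (P3A2 (v t.1) (v t.2)).
- rewrite PhiSplit fst3row row_mx0 add0r; apply: (subvP s3).
  exact: P3L3 (P3T3 (v t.1.1) (v t.1.2) (v t.2)).
Qed.

Lemma dimL1 : (\dim <<L1>> <= kappa_of C)%N.
Proof.
pose f : 'Hom('rV['F_3]_a, V) := linfun (mulmxr (row_mx 1%:M 0 : 'M['F_3]_(a, a + 3 * b))).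
have eL1 : L1 = map f [seq (u i).1 | i <- enum 'I_g].
  by rewrite -map_comp; apply: eq_map => i /=; rewrite lfunE /= mul_mx_row mulmx1 mulmx0.
rewrite eL1 -limg_span.
apply: leq_trans (_ : \dim <<[seq (u i).1 | i <- enum 'I_g]>> <= _)%N.
  by rewrite -(limg_ker_dim f) leq_addl.
apply: dimvS; apply: sub_span => x /mapP [i _ ->]; apply/mapP; exists (u i) => //.
by rewrite mem_enum inE HuC Hu3 eqxx.
Qed.

Lemma dimS_le2 : (\dim S <= b + d + kappa_of C)%N.
Proof.
rewrite SW; apply: leq_trans (dimvS W_sub_U3) _.
have h1 := leq_of_leqif (dimv_add_leqif (<<L1>> + <<L2>>)%VS <<L3>>%VS).
have h2 := leq_of_leqif (dimv_add_leqif <<L1>>%VS <<L2>>%VS).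
have h3 : (\dim <<L2>> <= d)%N by apply: leq_trans (dim_span _) _; rewrite size_map size_enum_ord.
have h4 : (\dim <<L3>> <= b)%N by apply: leq_trans (dim_span _) _; rewrite size_map size_enum_ord.
have h5 := dimL1.
rewrite /U3; lia.
Qed.

End Main.

Local Close Scope ring_scope.

Lemma sum_le (d k : nat) (f : nat -> nat) : k < d ->
  \sum_(l < d) (if l <= k then f l else 0) = \sum_(l < k.+1) f l.
Proof.
move=> hk; rewrite -(big_mkord xpredT (fun l => if l <= k then f l else 0)).
rewrite -(big_mkord xpredT f) (big_cat_nat _ (n := k.+1)) //=.
have -> : \sum_(k.+1 <= i < d) (if i <= k then f i else 0) = 0.
  by rewrite big_nat_cond big1 // => i /andP [/andP [hi _] _]; rewrite leqNgt hi.
rewrite addn0 big_nat_cond [RHS]big_nat_cond.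
by apply: eq_bigr => i /andP [/andP [_ hi] _]; rewrite -ltnS hi.
Qed.

Lemma sum_succ d : \sum_(k < d) k.+1 = 'C(d.+1, 2).
Proof.
elim: d => [|d IH]; first by rewrite big_ord0.
by rewrite big_ord_recr /= IH [RHS]binS bin1.
Qed.

Lemma sum_bin2 d : \sum_(k < d) 'C(k.+2, 2) = 'C(d.+2, 3).
Proof.
elim: d => [|d IH]; first by rewrite big_ord0.
by rewrite big_ord_recr /= IH [in RHS]binS addnC.
Qed.

Lemma cnt2 d : #|[set kl : 'I_d * 'I_d | kl.2 <= kl.1]| = 'C(d.+1, 2).
Proof.
rewrite -sum1_card big_mkcond /=.
rewrite (eq_bigr (fun kl : 'I_d * 'I_d => if kl.2 <= kl.1 then 1 else 0)); last first.
  by move=> kl _; rewrite inE.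
rewrite -(pair_bigA _ (fun (k l : 'I_d) => if l <= k then 1 else 0)) /=.
rewrite -sum_succ; apply: eq_bigr => k _.
rewrite (sum_le (fun _ => 1)) //.
by rewrite sum1_card card_ord.
Qed.

Lemma cnt3 d : #|[set xyz : 'I_d * 'I_d * 'I_d | (xyz.1.1 <= xyz.1.2) && (xyz.1.2 <= xyz.2)]| = 'C(d.+2, 3).
Proof.
rewrite -sum1_card big_mkcond /=.
rewrite (eq_bigr (fun p : 'I_d * 'I_d * 'I_d => if (p.1.1 <= p.1.2) && (p.1.2 <= p.2) then 1 else 0)); last first.
  by move=> p _; rewrite inE.
rewrite -(pair_bigA _ (fun (xy : 'I_d * 'I_d) (z : 'I_d) => if (xy.1 <= xy.2) && (xy.2 <= z) then 1 else 0)) /=.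
rewrite exchange_big /=.
rewrite -sum_bin2; apply: eq_bigr => z _.
rewrite -(pair_bigA _ (fun (x y : 'I_d) => if (x <= y) && (y <= z) then 1 else 0)) /=.
rewrite exchange_big /=.
rewrite (eq_bigr (fun y : 'I_d => if y <= z then y.+1 else 0)); last first.
  move=> y _; case: (leqP y z) => hyz.
    rewrite (eq_bigr (fun x : 'I_d => if x <= y then 1 else 0)); last by move=> x _; rewrite andbT.
    by rewrite (sum_le (fun _ => 1)) // sum1_card card_ord.
  by rewrite big1 // => x _; rewrite andbF.
by rewrite (sum_le (fun y => y.+1)) // sum_succ.
Qed.

Local Open Scope ring_scope.

Lemma row_decomp (R : pzSemiRingType) n (r : 'rV[R]_n) (c : 'I_n -> nat) :
  (forall i, (c i)%:R = r 0 i) -> r = \sum_(i < n) delta_mx 0 i *+ c i.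
Proof.
move=> h; apply/rowP => i; rewrite summxE (bigD1 i) //= big1 ?addr0.
  by rewrite mulmxnE mxE !eqxx /= h.
by move=> j hj; rewrite mulmxnE mxE eqxx /= eq_sym (negbTE hj) mul0rn.
Qed.

Section FromF.
Variables (a b g d : nat) (C : {set amb a b}).
Variable f : 'rV['F_3]_g * 'rV['Z_9]_d -> amb a b.
Hypothesis fD : forall x y, f (x + y) = f x + f y.
Hypothesis fim : f @: setT = C.
Local Notation A := (amb a b).

Lemma f0 : f 0 = 0.
Proof. by apply: (addrI (f 0)); rewrite -fD !addr0. Qed.
Lemma fMn x n : f (x *+ n) = f x *+ n.
Proof. by elim: n => [|n IH]; rewrite ?mulr0n ?f0 // !mulrS fD IH. Qed.
Lemma fsum I (r : seq I) (F : I -> _) : f (\sum_(i <- r) F i) = \sum_(i <- r) f (F i).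
Proof. exact: (big_morph f fD f0). Qed.

Definition uf (i : 'I_g) : A := f (delta_mx 0 i, 0).
Definition vf (j : 'I_d) : A := f (0, delta_mx 0 j).

Lemma ufC i : uf i \in C. Proof. by rewrite -fim; apply: imset_f; rewrite inE. Qed.
Lemma vfC j : vf j \in C. Proof. by rewrite -fim; apply: imset_f; rewrite inE. Qed.

Lemma pair_sum1 I (r : seq I) (F : I -> 'rV['F_3]_g) :
  (\sum_(i <- r) F i, 0 : 'rV['Z_9]_d) = \sum_(i <- r) (F i, 0).
Proof.
apply: (big_morph (fun x => (x, 0 : 'rV['Z_9]_d))) => [x y|] //=.
by congr pair; rewrite addr0.
Qed.
Lemma pair_sum2 I (r : seq I) (F : I -> 'rV['Z_9]_d) :
  (0 : 'rV['F_3]_g, \sum_(i <- r) F i) = \sum_(i <- r) (0, F i).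
Proof.
apply: (big_morph (fun y => (0 : 'rV['F_3]_g, y))) => [x y|] //=.
by congr pair; rewrite addr0.
Qed.
Lemma pairMn1 (x : 'rV['F_3]_g) n : (x *+ n, 0 : 'rV['Z_9]_d) = (x, 0) *+ n.
Proof. by elim: n => [|n IH] //; rewrite !mulrS -IH; congr pair; rewrite /= addr0. Qed.
Lemma pairMn2 (y : 'rV['Z_9]_d) n : (0 : 'rV['F_3]_g, y *+ n) = (0, y) *+ n.
Proof. by elim: n => [|n IH] //; rewrite !mulrS -IH; congr pair; rewrite /= addr0. Qed.

Lemma uf3 i : uf i *+ 3 = 0.
Proof.
rewrite /uf -fMn -pairMn1 -f0; congr f; congr pair.
by apply/rowP => k; rewrite mulmxnE F3_3 mxE.
Qed.

Lemma fgen (X : A -> Prop) : X 0 -> (forall x y, X x -> X y -> X (x + y)) ->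
  (forall i, X (uf i)) -> (forall j, X (vf j)) -> forall c, c \in C -> X c.
Proof.
move=> X0 XD Xu Xv c; rewrite -fim => /imsetP [[x y] _ ->].
have XMn z n : X z -> X (z *+ n).
  by move=> hz; elim: n => [|n IH]; rewrite ?mulr0n // mulrS; apply: (XD).
have -> : (x, y) = (x, 0) + (0, y) by congr pair; rewrite ?addr0 ?add0r.
rewrite fD; apply: (XD).
  rewrite {1}(@row_decomp _ _ x (fun i => nat_of_ord (x 0 i)) (fun i => natr_Zp _)).
  rewrite pair_sum1 fsum; apply: (big_ind X); [exact: X0 | exact: XD | move=> i _].
  by rewrite pairMn1 fMn; apply: (XMn); exact: Xu.
rewrite {1}(@row_decomp _ _ y (fun i => nat_of_ord (y 0 i)) (fun i => natr_Zp _)).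
rewrite pair_sum2 fsum; apply: (big_ind X); [exact: X0 | exact: XD | move=> i _].
by rewrite pairMn2 fMn; apply: (XMn); exact: Xv.
Qed.

End FromF.

Section FromGM.
Variables (a b g d : nat) (C : {set amb a b}) (u : 'I_g -> amb a b) (v : 'I_d -> amb a b).
Hypothesis Hgm : is_gen_matrix C u v.
Local Notation A := (amb a b).

Lemma gm_u3 i : u i *+ 3 = 0.
Proof. by case: Hgm => h _ _ _; case: (h i). Qed.

Lemma gm_uC i : u i \in C.
Proof.
case: Hgm => _ _ _ <-.
pose p : {ffun 'I_g -> 'Z_3} * {ffun 'I_d -> 'Z_9} :=
  ([ffun i' => if i' == i then 1 else 0], [ffun _ => 0]).
have -> : u i = comb u v p.
  rewrite /comb /= (bigD1 i) //= ffunE eqxx big1 ?addr0.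
    by rewrite big1 ?addr0 // => j _; rewrite ffunE mulr0n.
  by move=> j hj; rewrite ffunE (negbTE hj) mulr0n.
by apply: imset_f; rewrite inE.
Qed.

Lemma gm_vC j : v j \in C.
Proof.
case: Hgm => _ _ _ <-.
pose p : {ffun 'I_g -> 'Z_3} * {ffun 'I_d -> 'Z_9} :=
  ([ffun _ => 0], [ffun j' => if j' == j then 1 else 0]).
have -> : v j = comb u v p.
  rewrite /comb /= big1 ?add0r; last by move=> i _; rewrite ffunE mulr0n.
  rewrite (bigD1 j) //= ffunE eqxx big1 ?addr0 //.
  by move=> j' hj; rewrite ffunE (negbTE hj) mulr0n.
by apply: imset_f; rewrite inE.
Qed.

Lemma gm_gen (X : A -> Prop) : X 0 -> (forall x y, X x -> X y -> X (x + y)) ->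
  (forall i, X (u i)) -> (forall j, X (v j)) -> forall c, c \in C -> X c.
Proof.
move=> X0 XD Xu Xv c; case: Hgm => _ _ _ <- /imsetP [p _ ->].
have XMn z n : X z -> X (z *+ n).
  by move=> hz; elim: n => [|n IH]; rewrite ?mulr0n // mulrS; apply: (XD).
rewrite /comb; apply: (XD).
  by apply: (big_ind X); [exact: X0 | exact: XD | move=> i _; apply: (XMn); exact: Xu].
by apply: (big_ind X); [exact: X0 | exact: XD | move=> i _; apply: (XMn); exact: Xv].
Qed.

End FromGM.


Unset Implicit Arguments. Set Strict Implicit.

Theorem theorem5 (a b g d k : nat) (C : {set amb a b}) :
  (0 < a + b)%N -> has_type g d k C ->
  (* (i) *)
  (forall (u : 'I_g -> amb a b) (v : 'I_d -> amb a b),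
     is_gen_matrix C u v ->
     <<enum (Phi_code C)>>%VS =
     <<[seq Phi (u i) | i <- enum 'I_g]
       ++ [seq Phi (v j) | j <- enum 'I_d]
       ++ [seq Phi ((cwmul (v kl.1) (v kl.2)) *+ 3)
            | kl <- enum [set kl : 'I_d * 'I_d | (kl.2 <= kl.1)%N]]
       ++ [seq Phi ((cwmul (cwmul (v xyz.1.1) (v xyz.1.2)) (v xyz.2)) *+ 3)
            | xyz <- enum [set xyz : 'I_d * 'I_d * 'I_d |
                             (xyz.1.1 <= xyz.1.2)%N && (xyz.1.2 <= xyz.2)%N]]>>%VS)
  /\
  (* (ii) *)
  ((g + 2 * d <= rank3 (Phi_code C))%N /\
   (rank3 (Phi_code C) <= minn (b + d + k) (g + d + 'C(d.+1, 2) + 'C(d.+2, 3)))%N)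
  /\
  (* (iii) *)
  (exists D : {set amb a b}, is_additive_code D /\
     [set x | x \in <<enum (Phi_code C)>>%VS] = Phi_code D).
Proof.
move=> _ [HC [f [fD finj fim]] hk].
have H1 := uf3 fD.
have H2 := ufC fim.
have H3 := vfC fim.
have H4 := fun X => @fgen _ _ _ _ _ _ fD fim X.
split.
  move=> u v Hgm.
  exact: (SW HC (gm_u3 Hgm) (gm_uC Hgm) (gm_vC Hgm) (fun X => @gm_gen _ _ _ _ _ _ _ Hgm X)).
split; last first.
  by exists (Dset C); split; [exact: (Dset_add HC H1 H2 H3 H4) | exact: (Dset_im HC H1 H2 H3 H4)].
split.
  have hcard : #|C| = (3 ^ (g + 2 * d))%N.
    by rewrite -fim card_imset // cardsT card_prod !card_mx card_Fp // card_ord !mul1n expnD expnM.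
  have : (3 ^ (g + 2 * d) <= 3 ^ rank3 (Phi_code C))%N.
    rewrite -hcard -(card_imset _ (@Phi_inj a b)) -[X in (_ <= X ^ _)%N](card_Fp (p := 3)) //.
    rewrite /rank3 -card_vspace; apply: subset_leq_card; apply/subsetP => w hw.
    by apply: memv_span; rewrite mem_enum.
  by rewrite leq_exp2l.
rewrite leq_min; apply/andP; split.
  by rewrite hk; exact: (dimS_le2 HC H1 H2 H3 H4).
apply: leq_trans (dimS_size HC H1 H2 H3 H4) _.
by rewrite /Gl !size_cat !size_map -!enumT !size_enum_ord -!cardE cnt2 cnt3 !addnA.
Qed.
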